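(* In $(\lambda^2\beta\eta\pi* )'$: (1) for every type $\psi$, the set $\mathcal{SN}^\psi$ of SN terms of type $\psi$ is an RC of type $\psi$; (2) if $\mathcal{R}_i$ is an RC of type $\varphi_i$ for $i=1,2$, then $\mathcal{R}_1\times\mathcal{R}_2$ is an RC of type $\varphi_1\times\varphi_2$ and $\mathcal{R}_1\to\mathcal{R}_2$ is an RC of type $\varphi_1\to\varphi_2$.
   Context: System $(\lambda^2\beta\eta\pi* )'$. Types are generated from type variables $X,Y,\ldots$ and a type constant $\top$ by $\varphi\times\psi$, $\varphi\to\psi$ and $\forall X.\varphi$. Terms are Church-style typed: the constant $*^\top$, variables $x^\varphi$, $\lambda x^\varphi.t$, application $uv$, pairs $\langle u,v\rangle$, projections $\pi_1t,\pi_2t$, universal abstraction $(\Lambda X.v^\varphi)^{\forall X.\varphi}$ (allowed only when $X$ is not free in the type of any free variable of $v$), and universal application $(t^{\forall X.\varphi}\psi)^{\varphi[X:=\psi]}$. Terms are identified up to renaming of bound variables ($\equiv$); $\mathrm{FV}$, $\mathrm{FTV}$ denote free term / type variables. $\mathit{Iso}(\top)$ is the least set of types with $\top\in\mathit{Iso}(\top)$, $\varphi\to\tau$, $\forall X.\tau\in\mathit{Iso}(\top)$ if $\tau\in\mathit{Iso}(\top)$, $\tau_1\times\tau_2\in\mathit{Iso}(\top)$ if $\tau_1,\tau_2\in\mathit{Iso}(\top)$. For $\tau\in\mathit{Iso}(\top)$: $*^\top$ is the constant, $*^{\varphi\to\tau}:=\lambda x^\varphi.*^\tau$, $*^{\tau_1\times\tau_2}:=\langle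 *^{\tau_1},*^{\tau_2}\rangle$, $*^{\forall X.\tau}:=\Lambda X.*^\tau$. The one-step relation $\to$ is the closure under all contexts of: $(\beta)$ $(\lambda x.u)v\to u[x:=v]$; $\pi_1\langle u,v\rangle\to u$, $\pi_2\langle u,v\rangle\to v$; $(\eta)$ $\lambda x.tx\to t$ ($x\notin\mathrm{FV}(t)$); $(SP)$ $\langle\pi_1u,\pi_2u\rangle\to u$; (gentop) $u^\tau\to *^\tau$ ($\tau\in\mathit{Iso}(\top)$, $u\not\equiv *^\tau$); $(\eta_{top})$ $\lambda x^\tau.t\,*^\tau\to t$ ($x\notin\mathrm{FV}(t)$, $\tau\in\mathit{Iso}(\top)$); $\langle\pi_1u,*^\tau\rangle\to u$ ($u:\varphi\times\tau$, $\tau\in\mathit{Iso}(\top)$); $\langle *^\tau,\pi_2u\rangle\to u$ ($u:\tau\times\psi$, $\tau\in\mathit{Iso}(\top)$); $(\beta^2)$ $(\Lambda X.t)\varphi\to t[X:=\varphi]$; $(\eta^2)$ $\Lambda X.sX\to s$ ($X\notin\mathrm{FTV}(s)$). A term is SN if no infinite $\to$-sequence starts from it; $\mathcal{SN}^\psi$ is the set of SN terms of type $\psi$. A term is neutral if it is not of the form $\langle u,v\rangle$, $\lambda x.v$ or $\Lambda X.u$. For a term $t$ and a variable $z^\top$, $t[*^\top:=z^\top]$ replaces every occurrence of the constant $*^\top$ in $t$ by $z^\top$; a set $A$ of terms is variant-closed if $t[*^\top:=z^\top]\in A$ for every $t\in A$ and every variable $z^\top$ not occurring in $t$. A reducibility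 candidate (RC) of type $\varphi$ is a set $\mathcal{R}$ of terms of type $\varphi$ such that: (CR0) if $\varphi\in\mathit{Iso}(\top)$ then $*^\varphi\in\mathcal{R}$, and $\mathcal{R}$ is variant-closed; (CR1) every $t\in\mathcal{R}$ is SN; (CR2) $t\in\mathcal{R}$, $t\to t'$ imply $t'\in\mathcal{R}$; (CR3) if $t$ of type $\varphi$ is neutral and every one-step reduct of $t$ is in $\mathcal{R}$, then $t\in\mathcal{R}$. For RCs $\mathcal{R}_i$ of type $\varphi_i$: $\mathcal{R}_1\times\mathcal{R}_2=\{t^{\varphi_1\times\varphi_2}\mid \pi_it\in\mathcal{R}_i, i=1,2\}$ and $\mathcal{R}_1\to\mathcal{R}_2=\{t^{\varphi_1\to\varphi_2}\mid \forall u\in\mathcal{R}_1,\ tu\in\mathcal{R}_2\}$. *)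

(* Defs.v *)
(* System (lambda^2 beta eta pi * )'  : Church-style System F
   with products and a unit-like type constant Top.

   Representation conventions:
   - Bound type variables are de Bruijn indices (TBvar); free type variables
     are named (TFvar n).
   - Bound term variables are de Bruijn indices (Bvar); free term variables
     are Church-style typed named variables (Fvar n A), i.e. x^A.  Two such
     variables are equal iff name and type agree.
   - Hence alpha-equivalent terms are syntactically equal.
   - A paper term of type phi is a term t with  has_type 0 [] t phi.  *)
From Stdlib Require Import Arith List.
Import ListNotations.

Inductive ty : Type :=
| TFvar : nat -> ty
| TBvar : nat -> ty
| Top : ty
| Prod : ty -> ty -> ty
| Arr : ty -> ty -> ty
| All : ty -> ty.

Fixpoint twf (d : nat) (A : ty) : Prop :=
  match A with
  | TFvar _ => True
  | TBvar i => i < d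
  | Top => True
  | Prod A B => twf d A /\ twf d B
  | Arr A B => twf d A /\ twf d B
  | All B => twf (S d) B
  end.

Fixpoint tshift (c : nat) (A : ty) : ty :=
  match A with
  | TFvar n => TFvar n
  | TBvar i => TBvar (if c <=? i then S i else i)
  | Top => Top
  | Prod A B => Prod (tshift c A) (tshift c B)
  | Arr A B => Arr (tshift c A) (tshift c B)
  | All B => All (tshift (S c) B)
  end.

Fixpoint tsubst (k : nat) (s : ty) (A : ty) : ty :=
  match A with
  | TFvar n => TFvar n
  | TBvar i => if i <? k then TBvar i else if i =? k then s else TBvar (pred i)
  | Top => Top
  | Prod A B => Prod (tsubst k s A) (tsubst k s B)
  | Arr A B => Arr (tsubst k s A) (tsubst k s B)
  | All B => All (tsubst (S k) (tshift 0 s) B)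
  end.

Inductive iso_top : ty -> Prop :=
| iso_Top : iso_top Top
| iso_Arr : forall A t, iso_top t -> iso_top (Arr A t)
| iso_All : forall t, iso_top t -> iso_top (All t)
| iso_Prod : forall t1 t2, iso_top t1 -> iso_top t2 -> iso_top (Prod t1 t2).

Inductive tm : Type :=
| Fvar : nat -> ty -> tm
| Bvar : nat -> tm
| Star : tm
| Lam : ty -> tm -> tm
| App : tm -> tm -> tm
| Pair : tm -> tm -> tm
| Proj1 : tm -> tm
| Proj2 : tm -> tm
| TAbs : tm -> tm
| TApp : tm -> ty -> tm.

(* *^tau  (meaningful for tau in Iso(Top)) *)
Fixpoint star (A : ty) : tm :=
  match A with
  | Arr B t => Lam B (star t)
  | Prod t1 t2 => Pair (star t1) (star t2)
  | All t => TAbs (star t)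
  | _ => Star
  end.

Fixpoint lift (c : nat) (t : tm) : tm :=
  match t with
  | Fvar n A => Fvar n A
  | Bvar i => Bvar (if c <=? i then S i else i)
  | Star => Star
  | Lam A b => Lam A (lift (S c) b)
  | App a b => App (lift c a) (lift c b)
  | Pair a b => Pair (lift c a) (lift c b)
  | Proj1 a => Proj1 (lift c a)
  | Proj2 a => Proj2 (lift c a)
  | TAbs b => TAbs (lift c b)
  | TApp b A => TApp (lift c b) A
  end.

Fixpoint tm_tshift (c : nat) (t : tm) : tm :=
  match t with
  | Fvar n A => Fvar n A
  | Bvar i => Bvar i
  | Star => Star
  | Lam A b => Lam (tshift c A) (tm_tshift c b)
  | App a b => App (tm_tshift c a) (tm_tshift c b)
  | Pair a b => Pair (tm_tshift c a) (tm_tshift c b)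
  | Proj1 a => Proj1 (tm_tshift c a)
  | Proj2 a => Proj2 (tm_tshift c a)
  | TAbs b => TAbs (tm_tshift (S c) b)
  | TApp b A => TApp (tm_tshift c b) (tshift c A)
  end.

Fixpoint subst (k : nat) (v : tm) (t : tm) : tm :=
  match t with
  | Fvar n A => Fvar n A
  | Bvar i => if i <? k then Bvar i else if i =? k then v else Bvar (pred i)
  | Star => Star
  | Lam A b => Lam A (subst (S k) (lift 0 v) b)
  | App a b => App (subst k v a) (subst k v b)
  | Pair a b => Pair (subst k v a) (subst k v b)
  | Proj1 a => Proj1 (subst k v a)
  | Proj2 a => Proj2 (subst k v a)
  | TAbs b => TAbs (subst k (tm_tshift 0 v) b)
  | TApp b A => TApp (subst k v b) A
  end.

Fixpoint tm_tsubst (k : nat) (s : ty) (t : tm) : tm :=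
  match t with
  | Fvar n A => Fvar n A
  | Bvar i => Bvar i
  | Star => Star
  | Lam A b => Lam (tsubst k s A) (tm_tsubst k s b)
  | App a b => App (tm_tsubst k s a) (tm_tsubst k s b)
  | Pair a b => Pair (tm_tsubst k s a) (tm_tsubst k s b)
  | Proj1 a => Proj1 (tm_tsubst k s a)
  | Proj2 a => Proj2 (tm_tsubst k s a)
  | TAbs b => TAbs (tm_tsubst (S k) (tshift 0 s) b)
  | TApp b A => TApp (tm_tsubst k s b) (tsubst k s A)
  end.

(* Typing: d = number of enclosing type binders, G = types of the enclosing
   bound term variables (index 0 first).  Free variables carry their type,
   which may not mention bound type variables: this encodes the side
   condition on Lambda X. v. *)
Inductive has_type : nat -> list ty -> tm -> ty -> Prop :=
| T_Fvar : forall d G n A, twf 0 A -> has_type d G (Fvar n A) A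
| T_Bvar : forall d G i A, nth_error G i = Some A -> has_type d G (Bvar i) A
| T_Star : forall d G, has_type d G Star Top
| T_Lam : forall d G A t B, twf d A -> has_type d (A :: G) t B ->
    has_type d G (Lam A t) (Arr A B)
| T_App : forall d G t u A B, has_type d G t (Arr A B) -> has_type d G u A ->
    has_type d G (App t u) B
| T_Pair : forall d G u v A B, has_type d G u A -> has_type d G v B ->
    has_type d G (Pair u v) (Prod A B)
| T_Proj1 : forall d G t A B, has_type d G t (Prod A B) -> has_type d G (Proj1 t) A
| T_Proj2 : forall d G t A B, has_type d G t (Prod A B) -> has_type d G (Proj2 t) B
| T_TAbs : forall d G t A, has_type (S d) (map (tshift 0) G) t A ->
    has_type d G (TAbs t) (All A)
| T_TApp : forall d G t A B, twf d B -> has_type d G t (All A) ->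
    has_type d G (TApp t B) (tsubst 0 B A).

(* One-step reduction, closed under all contexts; d, G record the binders
   passed so that the typed rules (gentop, pair-top rules) can refer to the
   type of the subterm. *)
Inductive step : nat -> list ty -> tm -> tm -> Prop :=
| S_beta : forall d G A u v, step d G (App (Lam A u) v) (subst 0 v u)
| S_pi1 : forall d G u v, step d G (Proj1 (Pair u v)) u
| S_pi2 : forall d G u v, step d G (Proj2 (Pair u v)) v
| S_eta : forall d G A t, step d G (Lam A (App (lift 0 t) (Bvar 0))) t
| S_SP : forall d G u, step d G (Pair (Proj1 u) (Proj2 u)) u
| S_gentop : forall d G u T, iso_top T -> has_type d G u T -> u <> star T ->
    step d G u (star T)
| S_etatop : forall d G T t, iso_top T ->
    step d G (Lam T (App (lift 0 t) (star T))) t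
| S_pairtop1 : forall d G u A T, iso_top T -> has_type d G u (Prod A T) ->
    step d G (Pair (Proj1 u) (star T)) u
| S_pairtop2 : forall d G u T B, iso_top T -> has_type d G u (Prod T B) ->
    step d G (Pair (star T) (Proj2 u)) u
| S_beta2 : forall d G t A, step d G (TApp (TAbs t) A) (tm_tsubst 0 A t)
| S_eta2 : forall d G s, step d G (TAbs (TApp (tm_tshift 0 s) (TBvar 0))) s
| S_Lam : forall d G A t t', step d (A :: G) t t' -> step d G (Lam A t) (Lam A t')
| S_AppL : forall d G t t' u, step d G t t' -> step d G (App t u) (App t' u)
| S_AppR : forall d G t u u', step d G u u' -> step d G (App t u) (App t u')
| S_PairL : forall d G u u' v, step d G u u' -> step d G (Pair u v) (Pair u' v)
| S_PairR : forall d G u v v', step d G v v' -> step d G (Pair u v) (Pair u v')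
| S_Proj1 : forall d G t t', step d G t t' -> step d G (Proj1 t) (Proj1 t')
| S_Proj2 : forall d G t t', step d G t t' -> step d G (Proj2 t) (Proj2 t')
| S_TAbs : forall d G t t', step (S d) (map (tshift 0) G) t t' ->
    step d G (TAbs t) (TAbs t')
| S_TApp : forall d G t t' A, step d G t t' -> step d G (TApp t A) (TApp t' A).

Definition typed (t : tm) (A : ty) : Prop := has_type 0 [] t A.
Definition red (t t' : tm) : Prop := step 0 [] t t'.

Definition SN (t : tm) : Prop :=
  ~ exists f : nat -> tm, f 0 = t /\ forall n, red (f n) (f (S n)).

Definition SNset (A : ty) : tm -> Prop := fun t => typed t A /\ SN t.

Definition neutral (t : tm) : Prop :=
  match t with
  | Pair _ _ | Lam _ _ | TAbs _ => False
  | _ => True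
  end.

Fixpoint replace_star (z : nat) (t : tm) : tm :=
  match t with
  | Fvar n A => Fvar n A
  | Bvar i => Bvar i
  | Star => Fvar z Top
  | Lam A b => Lam A (replace_star z b)
  | App a b => App (replace_star z a) (replace_star z b)
  | Pair a b => Pair (replace_star z a) (replace_star z b)
  | Proj1 a => Proj1 (replace_star z a)
  | Proj2 a => Proj2 (replace_star z a)
  | TAbs b => TAbs (replace_star z b)
  | TApp b A => TApp (replace_star z b) A
  end.

Fixpoint occurs (z : nat) (A : ty) (t : tm) : Prop :=
  match t with
  | Fvar n B => n = z /\ B = A
  | Bvar _ | Star => False
  | Lam _ b | Proj1 b | Proj2 b | TAbs b | TApp b _ => occurs z A b
  | App a b | Pair a b => occurs z A a \/ occurs z A b
  end.

Definition variant_closed (R : tm -> Prop) : Prop :=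
  forall t z, R t -> ~ occurs z Top t -> R (replace_star z t).

Record RC (A : ty) (R : tm -> Prop) : Prop := {
  rc_typed : forall t, R t -> typed t A;
  rc_CR0_star : iso_top A -> R (star A);
  rc_CR0_variant : variant_closed R;
  rc_CR1 : forall t, R t -> SN t;
  rc_CR2 : forall t t', R t -> red t t' -> R t';
  rc_CR3 : forall t, typed t A -> neutral t ->
             (forall t', red t t' -> R t') -> R t
}.

Definition RCprod (A1 A2 : ty) (R1 R2 : tm -> Prop) : tm -> Prop :=
  fun t => typed t (Prod A1 A2) /\ R1 (Proj1 t) /\ R2 (Proj2 t).

Definition RCarr (A1 A2 : ty) (R1 R2 : tm -> Prop) : tm -> Prop :=
  fun t => typed t (Arr A1 A2) /\ forall u, R1 u -> R2 (App t u).

(* Main.v *)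
Require Import Defs.
From Stdlib Require Import Arith List Lia Classical ClassicalEpsilon.
Import ListNotations.

Ltac bdes := repeat match goal with
 | |- context [?a <=? ?b] => destruct (Nat.leb_spec a b)
 | |- context [?a <? ?b] => destruct (Nat.ltb_spec a b)
 | |- context [?a =? ?b] => destruct (Nat.eqb_spec a b)
 end.

Ltac vsolve := repeat (cbn [tshift tsubst]; bdes; subst; cbn [tshift tsubst]; try lia; try reflexivity; try (f_equal; lia)).

Lemma twf_mono : forall A n m, twf n A -> n <= m -> twf m A.
Proof. induction A; simpl; intros; try tauto; try lia.
  - destruct H; split; eauto.
  - destruct H; split; eauto.
  - eapply IHA; eauto; lia. Qed.

Lemma twf_shift : forall A n c, twf n A -> twf (S n) (tshift c A).
Proof. induction A; simpl; intros; try tauto.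
  - bdes; lia.
  - destruct H; split; eauto.
  - destruct H; split; eauto.
  - eauto. Qed.

Lemma twf_shift_inv : forall A n c, twf (S n) (tshift c A) -> c <= n -> twf n A.
Proof. induction A; simpl; intros; try tauto.
  - revert H; bdes; lia.
  - destruct H; split; eauto.
  - destruct H; split; eauto.
  - eapply IHA; eauto; lia. Qed.

Lemma shift_closed : forall A n c, twf n A -> n <= c -> tshift c A = A.
Proof. induction A; simpl; intros; try reflexivity.
  - bdes; f_equal; lia.
  - destruct H; f_equal; eauto.
  - destruct H; f_equal; eauto.
  - f_equal; eapply IHA; eauto; lia. Qed.

Lemma subst_closed : forall A n k s, twf n A -> n <= k -> tsubst k s A = A.
Proof. induction A; simpl; intros; try reflexivity.
  - bdes; f_equal; lia.
  - destruct H; f_equal; eauto.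
  - destruct H; f_equal; eauto.
  - f_equal; eapply IHA; eauto; lia. Qed.

Lemma twf_subst : forall A n k B, twf (S n) A -> twf n B -> k <= n -> twf n (tsubst k B A).
Proof. induction A; simpl; intros; try tauto.
  - bdes; simpl; try lia. auto.
  - destruct H; split; eauto.
  - destruct H; split; eauto.
  - eapply IHA; eauto; try lia. apply twf_shift; auto. Qed.

Lemma shift_shift : forall A c c', c' <= c -> tshift c' (tshift c A) = tshift (S c) (tshift c' A).
Proof. induction A; intros; cbn [tshift tsubst]; try reflexivity.
  - vsolve.
  - f_equal; auto.
  - f_equal; auto.
  - f_equal; apply IHA; lia. Qed.

Lemma shift_subst : forall A B k c, k <= c -> tshift c (tsubst k B A) = tsubst k (tshift c B) (tshift (S c) A).
Proof. induction A; intros; cbn [tshift tsubst]; try reflexivity.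
  - vsolve.
  - f_equal; auto.
  - f_equal; auto.
  - f_equal. rewrite IHA by lia. f_equal. symmetry; apply shift_shift; lia. Qed.

Lemma subst_shift_cancel : forall A k B, tsubst k B (tshift k A) = A.
Proof. induction A; intros; cbn [tshift tsubst]; try reflexivity.
  - vsolve.
  - f_equal; auto.
  - f_equal; auto.
  - f_equal; auto. Qed.

Lemma shift_subst2 : forall A B k c, c <= k -> tshift c (tsubst k B A) = tsubst (S k) (tshift c B) (tshift c A).
Proof. induction A; intros; cbn [tshift tsubst]; try reflexivity.
  - vsolve.
  - f_equal; auto.
  - f_equal; auto.
  - f_equal. rewrite IHA by lia. f_equal. symmetry; apply shift_shift; lia. Qed.

Lemma subst_subst : forall A B C j k, j <= k ->
  tsubst k B (tsubst j C A) = tsubst j (tsubst k B C) (tsubst (S k) (tshift j B) A).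
Proof. induction A; intros; cbn [tshift tsubst]; try reflexivity.
  - vsolve; symmetry; apply subst_shift_cancel.
  - f_equal; auto.
  - f_equal; auto.
  - f_equal. rewrite IHA by lia. f_equal.
    + symmetry. apply shift_subst2; lia.
    + f_equal. symmetry. apply shift_shift; lia. Qed.

Lemma subst_eta2 : forall A k, tsubst k (TBvar k) (tshift (S k) A) = A.
Proof. induction A; intros; cbn [tshift tsubst]; try reflexivity.
  - vsolve.
  - f_equal; auto.
  - f_equal; auto.
  - f_equal; auto. Qed.

Lemma weaken : forall d G t B, has_type d G t B -> forall G1 G2 A, G = G1 ++ G2 ->
  has_type d (G1 ++ A :: G2) (lift (length G1) t) B.
Proof.
  induction 1; intros G1 G2 A' E; subst; simpl.
  - constructor; auto.
  - constructor. destruct (Nat.leb_spec (length G1) i).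
    + rewrite nth_error_app2 by lia. rewrite nth_error_app2 in H by lia.
      replace (S i - length G1) with (S (i - length G1)) by lia. simpl. auto.
    + rewrite nth_error_app1 by lia. rewrite nth_error_app1 in H by lia. auto.
  - constructor.
  - constructor; auto. apply (IHhas_type (A :: G1) G2 A'); reflexivity.
  - econstructor; eauto.
  - constructor; eauto.
  - econstructor; eauto.
  - econstructor; eauto.
  - constructor. rewrite map_app. simpl.
    specialize (IHhas_type (map (tshift 0) G1) (map (tshift 0) G2) (tshift 0 A')).
    rewrite length_map in IHhas_type. apply IHhas_type. rewrite map_app. reflexivity.
  - econstructor; eauto.
Qed.

Lemma weaken0 : forall d G t B A, has_type d G t B -> has_type d (A :: G) (lift 0 t) B.
Proof. intros. apply (weaken d G t B H [] G A). reflexivity. Qed.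

Lemma strengthen : forall t d G1 A G2 B, has_type d (G1 ++ A :: G2) (lift (length G1) t) B ->
  has_type d (G1 ++ G2) t B.
Proof.
  induction t; intros d G1 A' G2 B H; simpl in H; inversion H; subst.
  - constructor; auto.
  - match goal with Hn : nth_error _ _ = Some _ |- _ => rename Hn into Hn' end.
    constructor. destruct (Nat.leb_spec (length G1) n).
    + rewrite nth_error_app2 by lia. rewrite nth_error_app2 in Hn' by lia.
      replace (S n - length G1) with (S (n - length G1)) in Hn' by lia. simpl in Hn'. auto.
    + rewrite nth_error_app1 by lia. rewrite nth_error_app1 in Hn' by lia. auto.
  - constructor.
  - constructor; auto. apply (IHt d (t :: G1) A' G2). simpl. auto.
  - econstructor; eauto.
  - constructor; eauto.
  - econstructor; eauto.
  - econstructor; eauto.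
  - match goal with Hn : has_type _ (map _ _) _ _ |- _ => rename Hn into Hn' end.
    constructor. rewrite map_app. rewrite map_app in Hn'. simpl in Hn'.
    eapply IHt. rewrite length_map. eauto.
  - econstructor; eauto.
Qed.

Lemma strengthen0 : forall t d G A B, has_type d (A :: G) (lift 0 t) B -> has_type d G t B.
Proof. intros. apply (strengthen t d [] A G B H). Qed.

Lemma tshift_typing : forall d G t A, has_type d G t A -> forall c, c <= d ->
  has_type (S d) (map (tshift c) G) (tm_tshift c t) (tshift c A).
Proof.
  induction 1; intros c Hc; simpl.
  - rewrite (shift_closed A 0 c) by (auto; lia). constructor; auto.
  - constructor. rewrite nth_error_map, H. reflexivity.
  - constructor.
  - constructor. apply twf_shift; auto. apply IHhas_type; auto.
  - econstructor; eauto.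
  - constructor; eauto.
  - econstructor; eauto.
  - econstructor; eauto.
  - constructor. rewrite map_map.
    erewrite map_ext. 2:{ intros. apply shift_shift. lia. }
    rewrite <- map_map. apply IHhas_type. lia.
  - rewrite shift_subst by lia. constructor. apply twf_shift; auto.
    apply (IHhas_type c Hc).
Qed.

Lemma subst_typing : forall d G' t B, has_type d G' t B -> forall G1 A G2 v, G' = G1 ++ A :: G2 ->
  has_type d (G1 ++ G2) v A -> has_type d (G1 ++ G2) (subst (length G1) v t) B.
Proof.
  induction 1; intros G1 A' G2 w E Hv; subst; simpl.
  - constructor; auto.
  - destruct (Nat.ltb_spec i (length G1)).
    + constructor. rewrite nth_error_app1 in * by lia. auto.
    + destruct (Nat.eqb_spec i (length G1)).
      * subst. rewrite nth_error_app2 in H by lia. rewrite Nat.sub_diag in H. simpl in H.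
        inversion H; subst; auto.
      * constructor. rewrite nth_error_app2 in * by lia.
        replace (i - length G1) with (S (pred i - length G1)) in H by lia. simpl in H. auto.
  - constructor.
  - constructor; auto. apply (IHhas_type (A :: G1) A' G2); auto. simpl. apply weaken0; auto.
  - econstructor; eauto.
  - constructor; eauto.
  - econstructor; eauto.
  - econstructor; eauto.
  - constructor. rewrite map_app. rewrite <- (length_map (tshift 0) G1).
    eapply IHhas_type. rewrite map_app; reflexivity.
    rewrite <- map_app. apply tshift_typing; auto. lia.
  - econstructor; eauto.
Qed.

Lemma subst_typing0 : forall d G A t B v, has_type d (A :: G) t B -> has_type d G v A ->
  has_type d G (subst 0 v t) B.
Proof. intros. apply (subst_typing d (A::G) t B H [] A G v); auto. Qed.

Lemma tsubst_typing : forall n G t A, has_type n G t A -> forall d k B, n = S d -> k <= d -> twf d B ->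
  has_type d (map (tsubst k B) G) (tm_tsubst k B t) (tsubst k B A).
Proof.
  induction 1; intros d' k B' En Hk Hw; subst; simpl.
  - rewrite (subst_closed A 0 k) by (auto; lia). constructor; auto.
  - constructor. rewrite nth_error_map, H. reflexivity.
  - constructor.
  - constructor. apply twf_subst; auto. apply (IHhas_type d' k B'); auto.
  - econstructor; eauto.
  - constructor; eauto.
  - econstructor; eauto.
  - econstructor; eauto.
  - constructor. rewrite map_map.
    erewrite map_ext. 2:{ intros. apply shift_subst2. lia. }
    rewrite <- map_map. apply IHhas_type; auto. lia. apply twf_shift; auto.
  - rewrite subst_subst by lia. constructor. apply twf_subst; auto.
    apply (IHhas_type d' k B'); auto.
Qed.

Lemma tshift_inj : forall A B c, tshift c A = tshift c B -> A = B.
Proof.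
  induction A; destruct B; intros c E; simpl in E; try discriminate;
  repeat match goal with H: context[?a <=? ?b] |- _ => destruct (Nat.leb_spec a b) end;
  try discriminate; inversion E; subst; auto; f_equal; eauto; lia.
Qed.

Ltac ht u X := match goal with Hx : has_type _ _ (tm_tshift _ u) _ |- _ => rename Hx into X end.

Lemma tshift_inv : forall s d G c T, has_type (S d) (map (tshift c) G) (tm_tshift c s) T -> c <= d ->
  exists T0, T = tshift c T0 /\ has_type d G s T0.
Proof.
  induction s; intros d G c T H Hc; simpl in H; inversion H; subst.
  - exists T. split. symmetry; apply (shift_closed T 0 c); auto; lia. constructor; auto.
  - match goal with Hn : nth_error _ _ = Some _ |- _ => rename Hn into Hn' end.
    rewrite nth_error_map in Hn'. destruct (nth_error G n) eqn:E; simpl in Hn'; inversion Hn'; subst.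
    exists t. split; auto. constructor; auto.
  - exists Top. split; auto. constructor.
  - ht s Hb. destruct (IHs d (t :: G) c _ Hb Hc) as [B0 [-> HB]].
    exists (Arr t B0). split; auto. constructor; auto. eapply twf_shift_inv; eauto.
  - ht s1 Ha. ht s2 Hb.
    destruct (IHs1 d G c _ Ha Hc) as [T1 [E1 H1]].
    destruct (IHs2 d G c _ Hb Hc) as [T2 [E2 H2]].
    destruct T1; simpl in E1; try discriminate. inversion E1; subst.
    exists T1_2. split; auto. apply tshift_inj in H3. subst. econstructor; eauto.
  - ht s1 Ha. ht s2 Hb.
    destruct (IHs1 d G c _ Ha Hc) as [T1 [E1 H1]].
    destruct (IHs2 d G c _ Hb Hc) as [T2 [E2 H2]]. subst.
    exists (Prod T1 T2). split; auto. constructor; auto.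
  - ht s Ha. destruct (IHs d G c _ Ha Hc) as [T1 [E1 H1]].
    destruct T1; simpl in E1; try discriminate. inversion E1; subst.
    exists T1_1. split; auto. econstructor; eauto.
  - ht s Ha. destruct (IHs d G c _ Ha Hc) as [T1 [E1 H1]].
    destruct T1; simpl in E1; try discriminate. inversion E1; subst.
    exists T1_2. split; auto. econstructor; eauto.
  - match goal with Hx : has_type _ _ (tm_tshift _ s) _ |- _ => rename Hx into H1 end.
    rewrite map_map in H1.
    erewrite map_ext in H1. 2:{ intros. apply shift_shift. lia. }
    rewrite <- map_map in H1.
    destruct (IHs (S d) (map (tshift 0) G) (S c) _ H1) as [T1 [E1 H1']]; [lia|].
    subst. exists (All T1). split; auto. constructor; auto.
  - ht s Ha. destruct (IHs d G c _ Ha Hc) as [T1 [E1 H1]].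
    destruct T1; simpl in E1; try discriminate. inversion E1; subst.
    exists (tsubst 0 t T1). split. symmetry; apply shift_subst; lia.
    constructor; auto. eapply twf_shift_inv; eauto.
Qed.

Lemma uniq : forall d G t A, has_type d G t A -> forall B, has_type d G t B -> A = B.
Proof.
  induction 1; intros B' HB; inversion HB; subst; auto; try congruence;
  repeat match goal with IH : forall B, has_type _ _ ?t B -> _ = B, H : has_type _ _ ?t _ |- _ =>
    apply IH in H; clear IH end; subst; try congruence.
Qed.

Lemma regular : forall d G t A, has_type d G t A -> Forall (twf d) G -> twf d A.
Proof.
  induction 1; intros HG; simpl in *.
  - eapply twf_mono; eauto; lia.
  - eapply Forall_forall; eauto. eapply nth_error_In; eauto.
  - auto.
  - split; auto.
  - apply IHhas_type1; auto.
  - split; auto.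
  - apply IHhas_type; auto.
  - apply IHhas_type; auto.
  - apply IHhas_type. rewrite Forall_map. eapply Forall_impl; [|exact HG]. intros; apply twf_shift; auto.
  - apply twf_subst; auto. lia.
Qed.

Lemma star_typed : forall T, iso_top T -> forall d G, twf d T -> has_type d G (star T) T.
Proof.
  induction 1; intros d G Hw; simpl in *.
  - constructor.
  - destruct Hw. constructor; auto.
  - constructor. apply IHiso_top. auto.
  - destruct Hw; constructor; auto.
Qed.

Lemma star_type_unique : forall T, iso_top T -> forall d G X, has_type d G (star T) X -> X = T.
Proof.
  induction 1; intros d G X HX; simpl in HX; inversion HX; subst; f_equal; eauto.
Qed.

Lemma star_not_app : forall T a b, star T <> App a b. Proof. destruct T; simpl; discriminate. Qed.
Lemma star_not_p1 : forall T a, star T <> Proj1 a. Proof. destruct T; simpl; discriminate. Qed.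
Lemma star_not_p2 : forall T a, star T <> Proj2 a. Proof. destruct T; simpl; discriminate. Qed.
Lemma star_not_tapp : forall T a b, star T <> TApp a b. Proof. destruct T; simpl; discriminate. Qed.

Ltac star_shape := match goal with
  | H : star _ = App _ _ |- _ => exfalso; eapply star_not_app; exact H
  | H : App _ _ = star _ |- _ => exfalso; eapply star_not_app; symmetry; exact H
  | H : star _ = Proj1 _ |- _ => exfalso; eapply star_not_p1; exact H
  | H : Proj1 _ = star _ |- _ => exfalso; eapply star_not_p1; symmetry; exact H
  | H : star _ = Proj2 _ |- _ => exfalso; eapply star_not_p2; exact H
  | H : Proj2 _ = star _ |- _ => exfalso; eapply star_not_p2; symmetry; exact H
  | H : star _ = TApp _ _ |- _ => exfalso; eapply star_not_tapp; exact H
  | H : TApp _ _ = star _ |- _ => exfalso; eapply star_not_tapp; symmetry; exact H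
  end.

Lemma star_normal : forall T, iso_top T -> forall d G u, step d G (star T) u -> False.
Proof.
  intros T HT. induction HT; intros d G u Hs; simpl in Hs; inversion Hs; subst; try star_shape.
  - match goal with H : has_type _ _ Star ?T0 |- _ => inversion H; subst end. simpl in *. congruence.
  - match goal with H : has_type _ _ _ ?T0, H' : iso_top ?T0 |- _ =>
      pose proof (star_type_unique _ (iso_Arr A t HT) _ _ _ H) end. subst. simpl in *. congruence.
  - eauto.
  - match goal with H : has_type _ _ _ ?T0, H' : iso_top ?T0 |- _ =>
      pose proof (star_type_unique _ (iso_All t HT) _ _ _ H) end. subst. simpl in *. congruence.
  - eauto.
  - match goal with H : has_type _ _ _ ?T0, H' : iso_top ?T0 |- _ =>
      pose proof (star_type_unique _ (iso_Prod t1 t2 HT1 HT2) _ _ _ H) end. subst. simpl in *. congruence.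
  - eauto.
  - eauto.
Qed.

Lemma SR : forall d G t t', step d G t t' -> forall A, has_type d G t A -> Forall (twf d) G -> has_type d G t' A.
Proof.
  induction 1; intros T0 HT HG.
  - inversion HT; subst. match goal with H : has_type _ _ (Lam _ _) _ |- _ => inversion H; subst end.
    eapply subst_typing0; eauto.
  - inversion HT; subst. match goal with H : has_type _ _ (Pair _ _) _ |- _ => inversion H; subst end. auto.
  - inversion HT; subst. match goal with H : has_type _ _ (Pair _ _) _ |- _ => inversion H; subst end. auto.
  - inversion HT; subst. match goal with H : has_type _ _ (App _ _) _ |- _ => inversion H; subst end.
    match goal with H : has_type _ _ (Bvar 0) _ |- _ => inversion H; subst end.
    simpl in *. match goal with H : Some _ = Some _ |- _ => inversion H; subst end.
    eapply strengthen0; eauto.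
  - inversion HT; subst.
    do 2 match goal with H : has_type _ _ (_ u) _ |- _ => inversion H; subst; clear H end.
    match goal with H1 : has_type _ _ u ?X, H2 : has_type _ _ u ?Y |- _ =>
      pose proof (uniq _ _ _ _ H1 _ H2) end. congruence.
  - pose proof (uniq _ _ _ _ H0 _ HT). subst. apply star_typed; auto.
    eapply regular; eauto.
  - inversion HT; subst. match goal with H : has_type _ _ (App _ _) _ |- _ => inversion H; subst end.
    match goal with H : has_type _ _ (star _) _ |- _ => apply star_type_unique in H; auto end. subst.
    eapply strengthen0; eauto.
  - inversion HT; subst.
    match goal with H : has_type _ _ (Proj1 _) _ |- _ => inversion H; subst end.
    match goal with H : has_type _ _ (star _) _ |- _ => apply star_type_unique in H; auto end. subst.
    match goal with H1 : has_type _ _ u ?X, H2 : has_type _ _ u ?Y |- _ =>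
      pose proof (uniq _ _ _ _ H1 _ H2) end. congruence.
  - inversion HT; subst.
    match goal with H : has_type _ _ (Proj2 _) _ |- _ => inversion H; subst end.
    match goal with H : has_type _ _ (star _) _ |- _ => apply star_type_unique in H; auto end. subst.
    match goal with H1 : has_type _ _ u ?X, H2 : has_type _ _ u ?Y |- _ =>
      pose proof (uniq _ _ _ _ H1 _ H2) end. congruence.
  - inversion HT; subst. match goal with H : has_type _ _ (TAbs _) _ |- _ => inversion H; subst end.
    pose proof (tsubst_typing _ _ _ _ ltac:(eassumption) d 0 A eq_refl ltac:(lia) ltac:(assumption)) as HH.
    rewrite map_map in HH. erewrite map_ext in HH. 2:{ intros. apply subst_shift_cancel. }
    rewrite map_id in HH. exact HH.
  - inversion HT; subst. match goal with H : has_type _ _ (TApp _ _) _ |- _ => inversion H; subst end.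
    match goal with H : has_type _ _ (tm_tshift _ _) _ |- _ =>
      destruct (tshift_inv _ _ _ _ _ H ltac:(lia)) as [T1 [E1 H1]] end.
    destruct T1; simpl in E1; try discriminate. inversion E1; subst.
    rewrite (subst_eta2 T1 0). auto.
  - inversion HT; subst. constructor; auto.
  - inversion HT; subst. econstructor; eauto.
  - inversion HT; subst. econstructor; eauto.
  - inversion HT; subst. econstructor; eauto.
  - inversion HT; subst. econstructor; eauto.
  - inversion HT; subst. econstructor; eauto.
  - inversion HT; subst. econstructor; eauto.
  - inversion HT; subst. constructor; auto. apply IHstep; auto.
    rewrite Forall_map. eapply Forall_impl; [|exact HG]. intros; apply twf_shift; auto.
  - inversion HT; subst. econstructor; eauto.
Qed.

Definition unzv (z n : nat) (A : ty) : tm :=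
  match A with Top => if n =? z then Star else Fvar n A | _ => Fvar n A end.

Fixpoint unz (z : nat) (t : tm) : tm :=
  match t with
  | Fvar n A => unzv z n A
  | Bvar i => Bvar i
  | Star => Star
  | Lam A b => Lam A (unz z b)
  | App a b => App (unz z a) (unz z b)
  | Pair a b => Pair (unz z a) (unz z b)
  | Proj1 a => Proj1 (unz z a)
  | Proj2 a => Proj2 (unz z a)
  | TAbs b => TAbs (unz z b)
  | TApp b A => TApp (unz z b) A
  end.

Fixpoint zc (z : nat) (t : tm) : nat :=
  match t with
  | Fvar n A => match A with Top => if n =? z then 1 else 0 | _ => 0 end
  | Bvar _ | Star => 0
  | Lam _ b | Proj1 b | Proj2 b | TAbs b | TApp b _ => zc z b
  | App a b | Pair a b => zc z a + zc z b
  end.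

Ltac unzv_tac := unfold unzv; repeat match goal with
  | |- context [match ?A with Top => _ | _ => _ end] => destruct A
  | |- context [?n =? ?z] => destruct (Nat.eqb_spec n z) end; reflexivity.

Lemma unz_lift : forall z t c, unz z (lift c t) = lift c (unz z t).
Proof. induction t; intros; simpl; f_equal; auto. unzv_tac. Qed.

Lemma unz_tshift : forall z t c, unz z (tm_tshift c t) = tm_tshift c (unz z t).
Proof. induction t; intros; simpl; f_equal; auto. unzv_tac. Qed.

Lemma unz_subst : forall z t k v, unz z (subst k v t) = subst k (unz z v) (unz z t).
Proof. induction t; intros; simpl; try (f_equal; auto; fail).
  - unzv_tac.
  - destruct (n <? k); auto. destruct (n =? k); auto.
  - f_equal. rewrite IHt. rewrite unz_lift. auto.
  - f_equal. rewrite IHt. rewrite unz_tshift. auto.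
Qed.

Lemma unz_tsubst : forall z t k s, unz z (tm_tsubst k s t) = tm_tsubst k s (unz z t).
Proof. induction t; intros; simpl; f_equal; auto. unzv_tac. Qed.

Lemma unz_star : forall z T, unz z (star T) = star T.
Proof. induction T; simpl; f_equal; auto. Qed.

Lemma subst_star : forall T k v, subst k v (star T) = star T.
Proof. induction T; intros; simpl; f_equal; auto. Qed.

Lemma unz_typing : forall z d G t A, has_type d G t A -> has_type d G (unz z t) A.
Proof.
  induction 1; simpl; try (econstructor; eauto; fail).
  unfold unzv. destruct A; try (constructor; auto; fail). destruct (n =? z); constructor; auto.
Qed.

Lemma zc0 : forall z t, zc z t = 0 -> unz z t = t.
Proof. induction t; simpl; intros; try rewrite IHt by lia; try rewrite IHt1 by lia;
  try rewrite IHt2 by lia; auto.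
  unfold unzv. destruct t; auto. destruct (Nat.eqb_spec n z); auto; discriminate. Qed.

Lemma zc_star : forall z T, zc z (star T) = 0.
Proof. induction T; simpl; auto; lia. Qed.

Lemma sim : forall z d G s u, step d G s u ->
  step d G (unz z s) (unz z u) \/ (unz z s = unz z u /\ zc z u < zc z s).
Proof.
  induction 1; simpl.
  - left. rewrite unz_subst. constructor.
  - left; constructor.
  - left; constructor.
  - left. rewrite unz_lift. constructor.
  - left; constructor.
  - rewrite unz_star. destruct (zc z u) eqn:E.
    + left. rewrite (zc0 z u E). constructor; auto.
    + destruct (classic (unz z u = star T)).
      * right. split; auto. rewrite zc_star. lia.
      * left. apply S_gentop; auto. apply unz_typing; auto.
  - left. rewrite unz_lift, unz_star. apply S_etatop; auto.
  - left. rewrite unz_star. eapply S_pairtop1; [eauto| apply unz_typing; eauto].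
  - left. rewrite unz_star. eapply S_pairtop2; [eauto| apply unz_typing; eauto].
  - left. rewrite unz_tsubst. constructor.
  - left. rewrite unz_tshift. constructor.
  - destruct IHstep as [H1|[H1 H2]]; [left; constructor; auto | right; split; [congruence|lia]].
  - destruct IHstep as [H1|[H1 H2]]; [left; constructor; auto | right; split; [congruence|lia]].
  - destruct IHstep as [H1|[H1 H2]]; [left; constructor; auto | right; split; [congruence|lia]].
  - destruct IHstep as [H1|[H1 H2]]; [left; constructor; auto | right; split; [congruence|lia]].
  - destruct IHstep as [H1|[H1 H2]]; [left; constructor; auto | right; split; [congruence|lia]].
  - destruct IHstep as [H1|[H1 H2]]; [left; constructor; auto | right; split; [congruence|lia]].
  - destruct IHstep as [H1|[H1 H2]]; [left; constructor; auto | right; split; [congruence|lia]].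
  - destruct IHstep as [H1|[H1 H2]]; [left; constructor; auto | right; split; [congruence|lia]].
  - destruct IHstep as [H1|[H1 H2]]; [left; constructor; auto | right; split; [congruence|lia]].
Qed.

Definition SNa := Acc (fun a b => red b a).

Lemma SNa_SN : forall t, SNa t -> SN t.
Proof.
  intros t H. induction H as [t _ IH]. intros [f [H0 Hf]].
  apply (IH (f 1)). rewrite <- H0. apply Hf.
  exists (fun n => f (S n)). split; auto.
Qed.

Lemma SN_SNa : forall t, SN t -> SNa t.
Proof.
  intros t H. apply NNPP. intros Hn. apply H. clear H.
  assert (step1 : forall x : {x | ~ SNa x}, {y : {x | ~SNa x} | red (proj1_sig x) (proj1_sig y)}).
  { intros [x Hx]. apply constructive_indefinite_description.
    apply NNPP. intros Hno. apply Hx. constructor. intros y Hy. apply NNPP. intros Hy'.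
    apply Hno. exists (exist _ y Hy'). exact Hy. }
  exists (fun n => proj1_sig (Nat.iter n (fun x => proj1_sig (step1 x)) (exist _ t Hn))). split. reflexivity.
  intros n. simpl. apply (proj2_sig (step1 _)).
Qed.

Lemma SNa_unz : forall z s0, SNa s0 -> forall s, unz z s = s0 -> SNa s.
Proof.
  intros z s0 H. induction H as [s0 _ IH]. intros s E.
  remember (zc z s) as m eqn:Em. revert s E Em.
  induction m as [m IHm] using (well_founded_induction lt_wf). intros s E Em. subst.
  constructor. intros u Hu. destruct (sim z 0 [] s u Hu) as [H1|[H1 H2]].
  - eapply IH; eauto.
  - eapply IHm; eauto.
Qed.

Lemma unz_replace : forall z t, ~ occurs z Top t -> unz z (replace_star z t) = t.
Proof. induction t; simpl; intros; try (f_equal; tauto).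
  - unfold unzv. destruct t; auto. destruct (Nat.eqb_spec n z); auto. subst; tauto.
  - rewrite Nat.eqb_refl. auto.
Qed.

Lemma replace_unz : forall z t, replace_star z (unz z t) = replace_star z t.
Proof. induction t; simpl; f_equal; auto.
  unfold unzv. destruct t; auto. destruct (Nat.eqb_spec n z); subst; auto. Qed.

Lemma noocc_unz : forall z t, ~ occurs z Top (unz z t).
Proof. induction t; simpl; try tauto.
  unfold unzv. destruct t; simpl; try (intros [? ?]; discriminate).
  destruct (Nat.eqb_spec n z); simpl; tauto. Qed.

Lemma replace_typing : forall z d G t A, has_type d G t A -> has_type d G (replace_star z t) A.
Proof. induction 1; simpl; econstructor; eauto. exact I. Qed.

Inductive msteps (d : nat) (G : list ty) : tm -> tm -> Prop :=
| ms_refl : forall t, msteps d G t t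
| ms_step : forall t u v, step d G t u -> msteps d G u v -> msteps d G t v.

Lemma ms_trans : forall d G t u v, msteps d G t u -> msteps d G u v -> msteps d G t v.
Proof. induction 1; intros; auto. econstructor; eauto. Qed.

Ltac ms_cong C := induction 1; [apply ms_refl | eapply ms_step; [apply C; eassumption | assumption]].

Lemma ms_Lam : forall d G A t t', msteps d (A::G) t t' -> msteps d G (Lam A t) (Lam A t').
Proof. intros d G A. ms_cong S_Lam. Qed.
Lemma ms_P1 : forall d G t t', msteps d G t t' -> msteps d G (Proj1 t) (Proj1 t').
Proof. intros d G. ms_cong S_Proj1. Qed.
Lemma ms_P2 : forall d G t t', msteps d G t t' -> msteps d G (Proj2 t) (Proj2 t').
Proof. intros d G. ms_cong S_Proj2. Qed.
Lemma ms_TAbs : forall d G t t', msteps (S d) (map (tshift 0) G) t t' -> msteps d G (TAbs t) (TAbs t').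
Proof. intros d G. ms_cong S_TAbs. Qed.
Lemma ms_TApp : forall d G A t t', msteps d G t t' -> msteps d G (TApp t A) (TApp t' A).
Proof. intros d G A. ms_cong S_TApp. Qed.
Lemma ms_AppL : forall d G u t t', msteps d G t t' -> msteps d G (App t u) (App t' u).
Proof. intros d G u. ms_cong S_AppL. Qed.
Lemma ms_AppR : forall d G u t t', msteps d G t t' -> msteps d G (App u t) (App u t').
Proof. intros d G u. ms_cong S_AppR. Qed.
Lemma ms_PairL : forall d G u t t', msteps d G t t' -> msteps d G (Pair t u) (Pair t' u).
Proof. intros d G u. ms_cong S_PairL. Qed.
Lemma ms_PairR : forall d G u t t', msteps d G t t' -> msteps d G (Pair u t) (Pair u t').
Proof. intros d G u. ms_cong S_PairR. Qed.


Lemma zstep : forall z d G, step d G (Fvar z Top) Star.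
Proof. intros. apply (S_gentop d G (Fvar z Top) Top iso_Top). constructor. exact I. discriminate. Qed.

Lemma ms_unz : forall z t d G, msteps d G t (unz z t).
Proof.
  induction t; intros d G; simpl.
  - unfold unzv. destruct t; try apply ms_refl. destruct (Nat.eqb_spec n z); [subst|apply ms_refl].
    eapply ms_step; [apply zstep|apply ms_refl].
  - apply ms_refl.
  - apply ms_refl.
  - apply ms_Lam; apply IHt.
  - eapply ms_trans; [apply ms_AppL; apply IHt1 | apply ms_AppR; apply IHt2].
  - eapply ms_trans; [apply ms_PairL; apply IHt1 | apply ms_PairR; apply IHt2].
  - apply ms_P1; apply IHt.
  - apply ms_P2; apply IHt.
  - apply ms_TAbs; apply IHt.
  - apply ms_TApp; apply IHt.
Qed.

Lemma ms_replace : forall z t d G, msteps d G (replace_star z t) t.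
Proof.
  induction t; intros d G; simpl.
  - apply ms_refl.
  - apply ms_refl.
  - eapply ms_step; [apply zstep|apply ms_refl].
  - apply ms_Lam; apply IHt.
  - eapply ms_trans; [apply ms_AppL; apply IHt1 | apply ms_AppR; apply IHt2].
  - eapply ms_trans; [apply ms_PairL; apply IHt1 | apply ms_PairR; apply IHt2].
  - apply ms_P1; apply IHt.
  - apply ms_P2; apply IHt.
  - apply ms_TAbs; apply IHt.
  - apply ms_TApp; apply IHt.
Qed.

Lemma rc_ms : forall A R s s', RC A R -> R s -> msteps 0 [] s s' -> R s'.
Proof. intros A R s s' HR Hs Hm. induction Hm; auto. apply IHHm. eapply rc_CR2; eauto. Qed.

Lemma SNa_red : forall t t', SNa t -> red t t' -> SNa t'.
Proof. intros t t' H Hr. exact (Acc_inv H Hr). Qed.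

Lemma SNa_proj1 : forall a, SNa a -> forall t, a = Proj1 t -> SNa t.
Proof. intros a H. induction H as [a _ IH]. intros t ->. constructor. intros t' Ht.
  eapply IH; [|reflexivity]. constructor; auto. Qed.

Lemma SNa_appl : forall a, SNa a -> forall t u, a = App t u -> SNa t.
Proof. intros a H. induction H as [a _ IH]. intros t u ->. constructor. intros t' Ht.
  eapply IH; [|reflexivity]. constructor; auto. Qed.

Lemma var_in : forall A R n, RC A R -> twf 0 A -> R (Fvar n A).
Proof.
  intros A R n HR Hw. apply (rc_CR3 _ _ HR). constructor; auto. exact I.
  intros t' Hr. unfold red in Hr. inversion Hr; subst.
  assert (T = A) by (eapply uniq; eauto; constructor; auto). subst.
  apply rc_CR0_star; auto.
Qed.

Lemma part1 : forall psi : ty, twf 0 psi -> RC psi (SNset psi).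
Proof.
  intros psi Hw. constructor.
  - intros t [H _]; auto.
  - intros Hi. split. apply star_typed; auto. apply SNa_SN. constructor. intros y Hy.
    exfalso. eapply star_normal; eauto.
  - intros t z [Ht Hs] Hno. split. apply replace_typing; auto.
    apply SNa_SN. eapply (SNa_unz z t). apply SN_SNa; auto. apply unz_replace; auto.
  - intros t [_ H]; auto.
  - intros t t' [Ht Hs] Hr. split. eapply SR; eauto. apply SNa_SN. eapply SNa_red; eauto. apply SN_SNa; auto.
  - intros t Ht Hn H. split; auto. apply SNa_SN. constructor. intros t' Hr. apply SN_SNa. apply (H t' Hr).
Qed.

Lemma part_prod : forall (phi1 phi2 : ty) (R1 R2 : tm -> Prop),
      twf 0 phi1 -> twf 0 phi2 -> RC phi1 R1 -> RC phi2 R2 ->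
      RC (Prod phi1 phi2) (RCprod phi1 phi2 R1 R2).
Proof.
  intros A1 A2 R1 R2 W1 W2 H1 H2. constructor.
  - intros t [H _]; auto.
  - intros Hi. assert (Hi' := Hi). inversion Hi'; subst.
    assert (Ht : typed (star (Prod A1 A2)) (Prod A1 A2)) by (apply star_typed; simpl; auto).
    split; auto. split.
    + apply (rc_CR3 _ _ H1). econstructor; eauto. exact I.
      intros t' Hr. unfold red in Hr. inversion Hr; subst.
      * apply rc_CR0_star; auto.
      * assert (T = A1) by (eapply uniq; eauto; econstructor; eauto). subst. apply rc_CR0_star; auto.
      * exfalso. eapply (star_normal _ Hi); eauto.
    + apply (rc_CR3 _ _ H2). econstructor; eauto. exact I.
      intros t' Hr. unfold red in Hr. inversion Hr; subst.
      * apply rc_CR0_star; auto.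
      * assert (T = A2) by (eapply uniq; eauto; econstructor; eauto). subst. apply rc_CR0_star; auto.
      * exfalso. eapply (star_normal _ Hi); eauto.
  - intros t z [Ht [Ha Hb]] Hno. split. apply replace_typing; auto. split.
    + apply (rc_CR0_variant _ _ H1 (Proj1 t) z Ha Hno).
    + apply (rc_CR0_variant _ _ H2 (Proj2 t) z Hb Hno).
  - intros t [_ [Ha _]]. apply SNa_SN. eapply SNa_proj1; [|reflexivity]. apply SN_SNa. exact (rc_CR1 _ _ H1 _ Ha).
  - intros t t' [Ht [Ha Hb]] Hr. split. eapply SR; eauto. split.
    + apply (rc_CR2 _ _ H1 (Proj1 t)); auto. constructor; auto.
    + apply (rc_CR2 _ _ H2 (Proj2 t)); auto. constructor; auto.
  - intros t Ht Hn H. split; auto. split.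
    + apply (rc_CR3 _ _ H1). econstructor; eauto. exact I.
      intros t' Hr. unfold red in Hr. inversion Hr; subst.
      * contradiction.
      * assert (T = A1) by (eapply uniq; eauto; econstructor; eauto). subst. apply rc_CR0_star; auto.
      * apply (H _ ltac:(eassumption)).
    + apply (rc_CR3 _ _ H2). econstructor; eauto. exact I.
      intros t' Hr. unfold red in Hr. inversion Hr; subst.
      * contradiction.
      * assert (T = A2) by (eapply uniq; eauto; econstructor; eauto). subst. apply rc_CR0_star; auto.
      * apply (H _ ltac:(eassumption)).
Qed.

Lemma part_arr : forall (phi1 phi2 : ty) (R1 R2 : tm -> Prop),
      twf 0 phi1 -> twf 0 phi2 -> RC phi1 R1 -> RC phi2 R2 ->
      RC (Arr phi1 phi2) (RCarr phi1 phi2 R1 R2).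
Proof.
  intros A1 A2 R1 R2 W1 W2 H1 H2. constructor.
  - intros t [H _]; auto.
  - intros Hi. assert (Hi' := Hi). inversion Hi'; subst.
    assert (Ht : typed (star (Arr A1 A2)) (Arr A1 A2)) by (apply star_typed; simpl; auto).
    split; auto. intros u Hu.
    assert (Hs : SNa u) by (apply SN_SNa; exact (rc_CR1 _ _ H1 _ Hu)).
    induction Hs as [u _ IH].
    apply (rc_CR3 _ _ H2). econstructor; eauto. exact (rc_typed _ _ H1 _ Hu). exact I.
    intros t' Hr. unfold red in Hr. inversion Hr; subst.
    + rewrite subst_star. apply rc_CR0_star; auto.
    + assert (T = A2) by (eapply uniq; eauto; econstructor; eauto; exact (rc_typed _ _ H1 _ Hu)). subst.
      apply rc_CR0_star; auto.
    + exfalso. eapply (star_normal _ Hi); eauto.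
    + apply IH; auto. apply (rc_CR2 _ _ H1 u); auto.
  - intros t z [Ht H] Hno. split. apply replace_typing; auto. intros u Hu.
    assert (Hu' : R1 (unz z u)) by (eapply rc_ms; eauto; apply ms_unz).
    assert (Ha : R2 (App t (unz z u))) by auto.
    assert (Hno' : ~ occurs z Top (App t (unz z u))).
    { simpl. pose proof (noocc_unz z u). tauto. }
    pose proof (rc_CR0_variant _ _ H2 _ z Ha Hno') as Hb. simpl in Hb. rewrite replace_unz in Hb.
    eapply rc_ms; eauto. apply ms_AppR. apply ms_replace.
  - intros t [Ht H]. pose proof (H _ (var_in A1 R1 0 H1 W1)) as Ha.
    apply SNa_SN. eapply SNa_appl; [|reflexivity]. apply SN_SNa. exact (rc_CR1 _ _ H2 _ Ha).
  - intros t t' [Ht H] Hr. split. eapply SR; eauto. intros u Hu.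
    apply (rc_CR2 _ _ H2 (App t u)); auto. constructor; auto.
  - intros t Ht Hn H. split; auto. intros u Hu.
    assert (Hs : SNa u) by (apply SN_SNa; exact (rc_CR1 _ _ H1 _ Hu)).
    induction Hs as [u _ IH].
    apply (rc_CR3 _ _ H2). econstructor; eauto. exact (rc_typed _ _ H1 _ Hu). exact I.
    intros t' Hr. unfold red in Hr. inversion Hr; subst.
    + contradiction.
    + assert (T = A2) by (eapply uniq; eauto; econstructor; eauto; exact (rc_typed _ _ H1 _ Hu)). subst.
      apply rc_CR0_star; auto.
    + apply (H _ ltac:(eassumption)); auto.
    + apply IH; auto. apply (rc_CR2 _ _ H1 u); auto.
Qed.

Theorem mainTheorem14 :
  (forall psi : ty, twf 0 psi -> RC psi (SNset psi)) /\
  (forall (phi1 phi2 : ty) (R1 R2 : tm -> Prop),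
      twf 0 phi1 -> twf 0 phi2 -> RC phi1 R1 -> RC phi2 R2 ->
      RC (Prod phi1 phi2) (RCprod phi1 phi2 R1 R2) /\
      RC (Arr phi1 phi2) (RCarr phi1 phi2 R1 R2)).
Proof.
  split. exact part1. intros. split. apply part_prod; auto. apply part_arr; auto.
Qed.
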